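(* Let $P=\{p_1,\ldots,p_\aleph\}\subset\mathbb{R}^3$ be a finite point set with a connected neighborhood graph (neighborhoods $\mathcal{N}(i)\subset P$), unit normals $n_j$ and weights $\omega_j\geq 0$. Consider the modified variational shape approximation procedure: starting from some partition $P=\dot{\bigcup}_{i=1}^m P_i$ with unit proxy normals $N_i$, repeatedly apply a proxy update step followed by a switch step, stopping when no switch can be performed. Then this procedure terminates after finitely many iterations.
   Context: The error is $E=\sum_{i=1}^m\sum_{p_j\in P_i}\omega_j\|n_j-N_i\|_2^2$. Proxy update step: with the partition fixed, set $N_i=\frac{\sum_{p_j\in P_i}\omega_j n_j}{\left\|\sum_{p_j\in P_i}\omega_j n_j\right\|_2}$ (denominators assumed nonzero). Switch step: with the proxy normals fixed, among all pairs consisting of a point $p_i\in P_\ell$ and a neighbor $p_j\in\mathcal{N}(i)$ with $p_j\in P_h$, $h\neq\ell$, consider reassigning $p_i$ from $P_\ell$ to $P_h$; perform the reassignment that reduces $E$ maximally, provided it strictly reduces $E$. A switch ''can be performed'' if some such reassignment strictly reduces $E$. *)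

(* Defs.v *)
From HB Require Import structures.
From mathcomp Require Import all_boot all_order all_algebra.
Set Implicit Arguments. Unset Strict Implicit. Unset Printing Implicit Defensive.
Import Order.TTheory GRing.Theory Num.Theory.
Local Open Scope ring_scope.

Section VSA.
Variable R : rcfType.

Definition sqnorm (v : 'rV[R]_3) : R := \sum_(k < 3) (v 0 k) ^+ 2.
Definition vnorm (v : 'rV[R]_3) : R := Num.sqrt (sqnorm v).

Variables (K m : nat).
(* a partition P = P_1 u ... u P_m is encoded by the label map a : point -> part *)
Notation assign := {ffun 'I_K -> 'I_m}.

Definition vsa_error (w : 'I_K -> R) (n : 'I_K -> 'rV[R]_3)
  (a : assign) (N : 'I_m -> 'rV[R]_3) : R :=
  \sum_(i < m) \sum_(j < K | a j == i) w j * sqnorm (n j - N i).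

Definition wsum (w : 'I_K -> R) (n : 'I_K -> 'rV[R]_3) (a : assign) (i : 'I_m)
  : 'rV[R]_3 := \sum_(j < K | a j == i) w j *: n j.

Definition proxy_update w n (a : assign) : 'I_m -> 'rV[R]_3 :=
  fun i => (vnorm (wsum w n a i))^-1 *: wsum w n a i.

Definition reassign (a : assign) (i : 'I_K) (h : 'I_m) : assign :=
  [ffun j => if j == i then h else a j].

Definition switch_candidate (nbr : rel 'I_K) (a : assign) (i : 'I_K) (h : 'I_m)
  : bool :=
  (h != a i) && [exists j, nbr i j && (a j == h)].

Definition can_switch nbr w n (a : assign) (N : 'I_m -> 'rV[R]_3) : Prop :=
  exists i h, switch_candidate nbr a i h /\
    vsa_error w n (reassign a i h) N < vsa_error w n a N.

Definition switch_step nbr w n (a : assign) (N : 'I_m -> 'rV[R]_3) (a' : assign)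
  : Prop :=
  exists i h, [/\ switch_candidate nbr a i h, a' = reassign a i h,
    vsa_error w n a' N < vsa_error w n a N &
    forall i' h', switch_candidate nbr a i' h' ->
      vsa_error w n a' N <= vsa_error w n (reassign a i' h') N].

Definition vsa_iteration nbr w n (a a' : assign) : Prop :=
  (forall i, wsum w n a i != 0) /\ switch_step nbr w n a (proxy_update w n a) a'.

End VSA.

(* Main.v *)
Require Import Defs.
From HB Require Import structures.
From mathcomp Require Import all_boot all_order all_algebra.
From mathcomp Require Import ring lra.
Import Order.TTheory GRing.Theory Num.Theory.
Local Open Scope ring_scope.
Set Implicit Arguments. Unset Strict Implicit.

Section Aux.
Variable R : rcfType.

Definition dot (u v : 'rV[R]_3) : R := \sum_(k < 3) u 0 k * v 0 k.

Lemma sqnorm_ge0 (v : 'rV[R]_3) : 0 <= sqnorm v.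
Proof. by apply: sumr_ge0 => k _; exact: sqr_ge0. Qed.

Lemma sqnormB (u v : 'rV[R]_3) :
  sqnorm (u - v) = sqnorm u + sqnorm v - 2 * dot u v.
Proof. rewrite /sqnorm /dot !big_ord_recr !big_ord0 /= !mxE; ring. Qed.

Lemma dotC (u v : 'rV[R]_3) : dot u v = dot v u.
Proof. by apply: eq_bigr => k _; rewrite mulrC. Qed.

Lemma dotZl c (u v : 'rV[R]_3) : dot (c *: u) v = c * dot u v.
Proof. by rewrite /dot mulr_sumr; apply: eq_bigr => k _; rewrite mxE mulrA. Qed.

Lemma dotuu (u : 'rV[R]_3) : dot u u = sqnorm u.
Proof. by apply: eq_bigr => k _; rewrite expr2. Qed.

Lemma sqnormZ c (u : 'rV[R]_3) : sqnorm (c *: u) = c ^+ 2 * sqnorm u.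
Proof. by rewrite /sqnorm mulr_sumr; apply: eq_bigr => k _; rewrite mxE exprMn. Qed.

Lemma dot_suml (I : finType) (P : pred I) (F : I -> 'rV[R]_3) v :
  dot (\sum_(j | P j) F j) v = \sum_(j | P j) dot (F j) v.
Proof.
rewrite /dot; under eq_bigr => k _ do rewrite summxE mulr_suml.
by rewrite exchange_big.
Qed.

Lemma sqnorm_eq0 (v : 'rV[R]_3) : sqnorm v = 0 -> v = 0.
Proof.
move=> H; apply/matrixP => i k; rewrite (ord1 i) !mxE.
have /eqP : v 0 k ^+ 2 = 0.
  by apply: (psumr_eq0P _ H) => // j _; exact: sqr_ge0.
by rewrite sqrf_eq0 => /eqP.
Qed.


Lemma sqnorm1 (v : 'rV[R]_3) : vnorm v = 1 -> sqnorm v = 1.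
Proof. by move=> H; rewrite -(sqr_sqrtr (sqnorm_ge0 v)) -/(vnorm v) H expr1n. Qed.

Lemma vnorm_gt0 (S : 'rV[R]_3) : S != 0 -> 0 < vnorm S.
Proof.
move=> HS; rewrite /vnorm sqrtr_gt0 lt_def sqnorm_ge0 andbT.
by apply/eqP => /sqnorm_eq0 /eqP; rewrite (negbTE HS).
Qed.

Lemma vnorm_sq (S : 'rV[R]_3) : vnorm S ^+ 2 = sqnorm S.
Proof. by rewrite sqr_sqrtr // sqnorm_ge0. Qed.

Lemma proxy_unit (S : 'rV[R]_3) : S != 0 -> sqnorm ((vnorm S)^-1 *: S) = 1.
Proof.
move=> HS; have r0 := vnorm_gt0 HS.
rewrite sqnormZ -vnorm_sq exprVn mulVf // expf_neq0 // gt_eqF //.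
Qed.

Lemma proxy_dot (S : 'rV[R]_3) : S != 0 -> dot S ((vnorm S)^-1 *: S) = vnorm S.
Proof.
move=> HS; have r0 := vnorm_gt0 HS.
rewrite dotC dotZl dotuu -vnorm_sq expr2 mulrA mulVf ?mul1r // gt_eqF //.
Qed.

Lemma dot_le (S X : 'rV[R]_3) : S != 0 -> sqnorm X = 1 -> dot S X <= vnorm S.
Proof.
move=> HS HX; have r0 := vnorm_gt0 HS.
have H1 : (vnorm S)^-1 * dot S X <= 1.
  have := sqnorm_ge0 ((vnorm S)^-1 *: S - X).
  rewrite sqnormB proxy_unit // HX dotZl; lra.
rewrite -(ler_pM2l r0) mulrA divff ?gt_eqF // mul1r mulr1 in H1.
exact: H1.
Qed.

End Aux.

Lemma termE (R : rcfType) (K m : nat) (w : 'I_K -> R) (n : 'I_K -> 'rV[R]_3)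
  (a : {ffun 'I_K -> 'I_m}) (i : 'I_m) (X : 'rV[R]_3) :
  (forall j, sqnorm (n j) = 1) -> sqnorm X = 1 ->
  \sum_(j < K | a j == i) w j * sqnorm (n j - X) =
  2 * \sum_(j < K | a j == i) w j - 2 * dot (wsum w n a i) X.
Proof.
move=> Hn HX; rewrite /wsum dot_suml !mulr_sumr -sumrB.
by apply: eq_bigr => j _; rewrite sqnormB Hn HX dotZl; ring.
Qed.

Lemma proxy_opt (R : rcfType) (K m : nat) (w : 'I_K -> R) (n : 'I_K -> 'rV[R]_3)
  (a : {ffun 'I_K -> 'I_m}) (N : 'I_m -> 'rV[R]_3) :
  (forall j, sqnorm (n j) = 1) -> (forall i, sqnorm (N i) = 1) ->
  (forall i, wsum w n a i != 0) ->
  vsa_error w n a (proxy_update w n a) <= vsa_error w n a N.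
Proof.
move=> Hn HN Hs; apply: ler_sum => i _.
rewrite !termE //; last exact: proxy_unit.
rewrite /proxy_update proxy_dot //.
have := dot_le (Hs i) (HN i); lra.
Qed.


Unset Implicit Arguments.

Theorem mainTheorem2 (R : rcfType) (K m : nat)
  (p : 'I_K -> 'rV[R]_3) (p_inj : injective p)
  (nbr : rel 'I_K)
  (nbr_conn : forall i j, connect (fun x y => nbr x y || nbr y x) i j)
  (n : 'I_K -> 'rV[R]_3) (n_unit : forall j, vnorm (n j) = 1)
  (w : 'I_K -> R) (w_ge0 : forall j, 0 <= w j)
  (a0 : {ffun 'I_K -> 'I_m}) (N0 : 'I_m -> 'rV[R]_3)
  (N0_unit : forall i, vnorm (N0 i) = 1) :
  ~ (exists s : nat -> {ffun 'I_K -> 'I_m},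
       s 0%N = a0 /\ forall k, vsa_iteration nbr w n (s k) (s k.+1)).
Proof.
case=> s [_ Hs].
pose f := fun a : {ffun 'I_K -> 'I_m} => vsa_error w n a (proxy_update w n a).
have Hn1 : forall j, sqnorm (n j) = 1 by move=> j; exact: sqnorm1.
have dec : forall k, f (s k.+1) < f (s k).
  move=> k; have [Hw [i [h [_ Ha Hlt _]]]] := Hs k.
  have [Hw1 _] := Hs k.+1.
  apply: le_lt_trans Hlt.
  apply: proxy_opt => // i'; exact: proxy_unit.
have decd : forall i d, f (s (i + d.+1)%N) < f (s i).
  move=> i; elim=> [|d IH]; first by rewrite addn1.
  by rewrite addnS; apply: lt_trans (dec _) IH.
have inj : injective s.
  move=> i j Hij; case: (ltngtP i j) => // H.
  - have E : (i + (j - i.+1).+1)%N = j by rewrite subnSK // subnKC // ltnW.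
    by have := decd i (j - i.+1)%N; rewrite E Hij ltxx.
  - have E : (j + (i - j.+1).+1)%N = i by rewrite subnSK // subnKC // ltnW.
    by have := decd j (i - j.+1)%N; rewrite E Hij ltxx.
have inj' : injective (fun x : 'I_(#|{ffun 'I_K -> 'I_m}|.+1) => s x).
  by move=> x y /inj /val_inj.
by have := leq_card _ inj'; rewrite card_ord ltnn.
Qed.
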